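(* Let $\hat\mu\in\mathbb{C}\setminus\{0\}$. If $(\hat\mu,\hat\phi)$ with $\hat\phi\in X\setminus\{0\}$ satisfies $\mathscr{U}\hat\phi=\hat\mu\hat\phi$, then $\mathcal{N}(\hat\mu)\hat{\bm v}=0$, where $\hat{\bm v}=(v_1^{\mathrm T}\,\cdots\,v_N^{\mathrm T})^{\mathrm T}\in\mathbb{C}^{Nd}$ is given by $v_n=x((n-1)\Delta;0,\hat\phi)$, $n=1,\ldots,N$. Conversely, if $\hat{\bm v}\in\mathbb{C}^{Nd}\setminus\{0\}$ satisfies $\mathcal{N}(\hat\mu)\hat{\bm v}=0$, then $\mathscr{U}\hat\phi=\hat\mu\hat\phi$, where \[ \hat\phi(t)=\hat\mu^{\lfloor (n-1)/N\rfloor}\,q_{((n-1)\bmod N)+1}\Big(\frac{t}{\Delta}-(n-1)\Big),\quad t\in((n-1)\Delta,n\Delta],\ n=-n_h+1,\ldots,0, \] and $\bm q(s)=(q_1^{\mathrm T}(s)\,\cdots\,q_N^{\mathrm T}(s))^{\mathrm T}$ is the solution of $\dot{\bm q}(s)=A(s,\hat\mu)\bm q(s)$, $s\in[0,1]$, $\bm q(0)=\hat{\bm v}$.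
   Context: Consider $\dot{x}(t)=\sum_{j=0}^h A_j(t)x(t-\tau_j)$ with $x(t)\in\mathbb{R}^d$, $A_j:\mathbb{R}\to\mathbb{R}^{d\times d}$ smooth and $T$-periodic ($T>0$), $0=\tau_0\le\tau_1<\cdots<\tau_h$, and $\Delta>0$, integers $N,n_j$ with $T=N\Delta$, $\tau_j=n_j\Delta$ ($n_0=0$). Let $X=C([-\tau_h,0],\mathbb{C}^d)$; $x(t;t_0,\phi)$ is the solution with initial function $\phi\in X$ at time $t_0$ (i.e. $x(t)=\phi(t-t_0)$ on $[t_0-\tau_h,t_0]$), and the monodromy operator is $\mathscr{U}\phi=x_T(\cdot;0,\phi)$, where $x_t(\theta;t_0,\phi)=x(t+\theta;t_0,\phi)$, $\theta\in[-\tau_h,0]$. For $\mu\neq0$ define the $Nd\times Nd$ matrix-valued function $A(s,\mu)$ by: for $\bm q=(q_1^{\mathrm T},\ldots,q_N^{\mathrm T})^{\mathrm T}$, the $n$-th block of $A(s,\mu)\bm q$ is $\Delta\sum_{j=0}^h A_j((s+n-1)\Delta)\mu^{a_{n-n_j}}q_{b_{n-n_j}}$, where $a_k=\lfloor (k-1)/N\rfloor$, $b_k=((k-1)\bmod N)+1$. Let $B(\mu)=\begin{pmatrix}0&I_{N-1}\\ \mu&0\end{pmatrix}\otimes I_d$. The characteristic matrix $\mathcal N(\mu)\in\mathbb{C}^{Nd\times Nd}$ is defined by $\mathcal N(\mu)\bm v=\bm q(1)-B(\mu)\bm v$, where $\bm q$ solves $\dot{\bm q}(s)=A(s,\mu)\bm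 q(s)$, $s\in[0,1]$, $\bm q(0)=\bm v$. *)

(* Defs.v *)
From Stdlib Require Import Reals ZArith.
From Coquelicot Require Import Coquelicot.
Open Scope R_scope.

(* Vectors of C^d are represented as functions nat -> C (components 0..d-1);
   vectors of C^{Nd} as block functions nat -> nat -> C (block 1..N, component 0..d-1). *)

Fixpoint csum (n : nat) (f : nat -> C) : C :=
  match n with
  | O => RtoC 0
  | S m => Cplus (csum m f) (f m)
  end.

Fixpoint cpow (z : C) (n : nat) : C :=
  match n with
  | O => RtoC 1
  | S m => Cmult z (cpow z m)
  end.

Definition czpow (z : C) (k : Z) : C :=
  if (0 <=? k)%Z then cpow z (Z.to_nat k) else Cinv (cpow z (Z.to_nat (- k))).

Definition a_idx (N : nat) (k : Z) : Z := ((k - 1) / Z.of_nat N)%Z.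
Definition b_idx (N : nat) (k : Z) : nat := S (Z.to_nat ((k - 1) mod Z.of_nat N)%Z).

Definition cont_on (a b : R) (f : R -> C) : Prop :=
  forall t, a <= t <= b ->
    filterlim f (within (fun s => a <= s <= b) (locally t)) (locally (f t)).

Definition cont_from (a : R) (f : R -> C) : Prop :=
  forall t, a <= t ->
    filterlim f (within (fun s => a <= s) (locally t)) (locally (f t)).

Definition smooth (f : R -> R) : Prop := forall m t, ex_derive_n f m t.

Definition in_X (d : nat) (tauh : R) (phi : R -> nat -> C) : Prop :=
  forall i, (i < d)%nat -> cont_on (- tauh) 0 (fun t => phi t i).

Definition nonzero_X (d : nat) (tauh : R) (phi : R -> nat -> C) : Prop :=
  exists t i, - tauh <= t <= 0 /\ (i < d)%nat /\ phi t i <> RtoC 0.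

Definition dde_sol (d h : nat) (n : nat -> nat) (Delta : R)
    (A : nat -> R -> nat -> nat -> R) (phi : R -> nat -> C) (x : R -> nat -> C) : Prop :=
  let tauh := INR (n h) * Delta in
  (forall i, (i < d)%nat -> forall t, - tauh <= t <= 0 -> x t i = phi t i) /\
  (forall i, (i < d)%nat -> cont_from (- tauh) (fun t => x t i)) /\
  (forall i, (i < d)%nat -> forall t, 0 < t ->
     is_derive (K := R_AbsRing) (V := C_R_NormedModule) (fun s => x s i) t
       (csum (S h) (fun j => csum d (fun k =>
          Cmult (RtoC (A j t i k)) (x (t - INR (n j) * Delta) k))))).

(** monodromy eigen-relation  U phi = mu phi, for the solution x = x(.;0,phi):
    x_T(theta) = x(T + theta) = mu phi(theta), theta in [-tau_h,0], T = N Delta *)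
Definition monodromy_eig (d N h : nat) (n : nat -> nat) (Delta : R)
    (mu : C) (phi : R -> nat -> C) (x : R -> nat -> C) : Prop :=
  forall i, (i < d)%nat -> forall theta, - (INR (n h) * Delta) <= theta <= 0 ->
    x (INR N * Delta + theta) i = Cmult mu (phi theta i).

Definition Amat_app (d N h : nat) (n : nat -> nat) (Delta : R)
    (A : nat -> R -> nat -> nat -> R) (s : R) (mu : C) (q : nat -> nat -> C)
    (nb i : nat) : C :=
  Cmult (RtoC Delta)
    (csum (S h) (fun j =>
       let k := (Z.of_nat nb - Z.of_nat (n j))%Z in
       csum d (fun l =>
         Cmult (RtoC (A j ((s + INR nb - 1) * Delta) i l))
               (Cmult (czpow mu (a_idx N k)) (q (b_idx N k) l))))).

Definition ode_sol (d N h : nat) (n : nat -> nat) (Delta : R)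
    (A : nat -> R -> nat -> nat -> R) (mu : C) (v : nat -> nat -> C)
    (q : R -> nat -> nat -> C) : Prop :=
  (forall nb i, (1 <= nb <= N)%nat -> (i < d)%nat -> q 0 nb i = v nb i) /\
  (forall nb i, (1 <= nb <= N)%nat -> (i < d)%nat -> cont_on 0 1 (fun s => q s nb i)) /\
  (forall nb i, (1 <= nb <= N)%nat -> (i < d)%nat -> forall s, 0 < s < 1 ->
     is_derive (K := R_AbsRing) (V := C_R_NormedModule) (fun r => q r nb i) s
       (Amat_app d N h n Delta A s mu (q s) nb i)).

Definition Bmat_app (N : nat) (mu : C) (v : nat -> nat -> C) (nb i : nat) : C :=
  if (nb <? N)%nat then v (S nb) i else Cmult mu (v 1%nat i).

(** N(mu) v = 0, i.e. q(1) - B(mu) v = 0 where q is the solution of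
    q' = A(s,mu) q, q(0) = v. *)
Definition charmat_kernel (d N h : nat) (n : nat -> nat) (Delta : R)
    (A : nat -> R -> nat -> nat -> R) (mu : C) (v : nat -> nat -> C) : Prop :=
  forall q, ode_sol d N h n Delta A mu v q ->
    forall nb i, (1 <= nb <= N)%nat -> (i < d)%nat -> q 1 nb i = Bmat_app N mu v nb i.

Definition nonzero_vec (d N : nat) (v : nat -> nat -> C) : Prop :=
  exists nb i, (1 <= nb <= N)%nat /\ (i < d)%nat /\ v nb i <> RtoC 0.

(** ceil(t / Delta) as an integer *)
Definition ceil_div (t Delta : R) : Z := (- Int_part (- (t / Delta)))%Z.

Definition phi_of_q (N : nat) (Delta : R) (mu : C) (q : R -> nat -> nat -> C)
    (t : R) (i : nat) : C :=
  let m := ceil_div t Delta in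
  Cmult (czpow mu (a_idx N m)) (q (t / Delta - (IZR m - 1)) (b_idx N m) i).

(* Main.v *)
Require Import Defs.
From Stdlib Require Import Reals ZArith Lia Lra.
From Coquelicot Require Import Coquelicot.
Open Scope R_scope.

Lemma scal_RC (a : R) (b : C) : @scal _ C_R_NormedModule a b = Cmult (RtoC a) b.
Proof. destruct b as [b1 b2]. unfold scal; simpl. unfold prod_scal, Cmult, RtoC; simpl.
  unfold scal; simpl. unfold mult; simpl. f_equal; ring. Qed.

Lemma csum_ext n f g : (forall j, (j < n)%nat -> f j = g j) -> csum n f = csum n g.
Proof. induction n; simpl; intros H; auto. rewrite IHn by (intros; apply H; lia). rewrite H by lia. auto. Qed.

Lemma csum_minus n f g : Cminus (csum n f) (csum n g) = csum n (fun j => Cminus (f j) (g j)).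
Proof. induction n; simpl. ring. rewrite <- IHn. ring. Qed.

Lemma csum_mult_l n c f : Cmult c (csum n f) = csum n (fun j => Cmult c (f j)).
Proof. induction n; simpl. ring. rewrite <- IHn. ring. Qed.

Lemma Cmod_csum_le n f c : (forall j, (j < n)%nat -> Cmod (f j) <= c) -> Cmod (csum n f) <= INR n * c.
Proof. induction n; cbn [csum]; intros H.
 - rewrite Cmod_0. simpl. lra.
 - eapply Rle_trans. apply Cmod_triangle. rewrite S_INR.
   assert (H1 := IHn (fun j Hj => H j ltac:(lia))). assert (H2 := H n ltac:(lia)). lra.
Qed.

Lemma cpow_nz mu k : mu <> RtoC 0 -> cpow mu k <> RtoC 0.
Proof. intros H; induction k; simpl.
 - intro E. injection E. lra.
 - intro E. apply (f_equal Cmod) in E. rewrite Cmod_mult, Cmod_0 in E.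
   apply Cmod_gt_0 in H. apply Cmod_gt_0 in IHk. nra. Qed.

Lemma czpow_succ mu k : mu <> RtoC 0 -> czpow mu (k + 1) = Cmult mu (czpow mu k).
Proof. intros Hmu. unfold czpow.
 destruct (Z.leb_spec 0 k) as [Hk|Hk].
 - rewrite (proj2 (Z.leb_le 0 (k+1))) by lia.
   replace (Z.to_nat (k+1)) with (S (Z.to_nat k)) by lia. reflexivity.
 - destruct (Z.eq_dec k (-1)) as [E|E].
   + subst. simpl. field. auto.
   + rewrite (proj2 (Z.leb_gt 0 (k+1))) by lia.
     replace (Z.to_nat (- k)) with (S (Z.to_nat (- (k+1)))) by lia. simpl.
     field. split; auto. apply cpow_nz; auto.
Qed.

Lemma czpow_nz mu k : mu <> RtoC 0 -> czpow mu k <> RtoC 0.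
Proof. intros H. unfold czpow. destruct (0 <=? k)%Z. apply cpow_nz; auto.
  apply Cinv_neq_0 || (intro E; apply (cpow_nz mu (Z.to_nat (-k)) H);
  assert (E2 := Cinv_r (cpow mu (Z.to_nat (-k))) (cpow_nz _ _ H)); rewrite E in E2;
  rewrite Cmult_0_r in E2; injection E2; lra).
Qed.

Lemma czpow_pred mu k : mu <> RtoC 0 -> czpow mu (k - 1) = Cmult (Cinv mu) (czpow mu k).
Proof. intros H. replace k with ((k - 1) + 1)%Z at 2 by lia. rewrite czpow_succ by auto. field. auto. Qed.

Lemma czpow_add mu a b : mu <> RtoC 0 -> czpow mu (a + b) = Cmult (czpow mu a) (czpow mu b).
Proof. intros Hmu. revert a. induction b using Z.peano_ind; intros a.
 - rewrite Z.add_0_r. unfold czpow at 3. simpl. ring.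
 - rewrite <- Z.add_1_r. rewrite Z.add_assoc, !czpow_succ by auto. rewrite IHb. ring.
 - rewrite <- Z.sub_1_r. rewrite Z.add_sub_assoc, !czpow_pred by auto. rewrite IHb. ring.
Qed.


Ltac cring := match goal with |- ?a = ?b => change (@eq C a b); ring end.

Lemma is_derive_Re (f : R -> C) t D :
  is_derive (K := R_AbsRing) (V := C_R_NormedModule) f t D ->
  is_derive (fun s => Re (f s)) t (Re D).
Proof. unfold is_derive. intros H.
  eapply filterdiff_ext_lin.
  apply (filterdiff_comp' (U := R_NormedModule) (V := C_R_NormedModule) (W := R_NormedModule) f (fun z : C => fst z)).
  exact H. apply filterdiff_linear. apply (@is_linear_fst R_AbsRing R_NormedModule R_NormedModule).
  intros y. simpl. reflexivity.
Qed.

Lemma is_derive_Im (f : R -> C) t D :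
  is_derive (K := R_AbsRing) (V := C_R_NormedModule) f t D ->
  is_derive (fun s => Im (f s)) t (Im D).
Proof. unfold is_derive. intros H.
  eapply filterdiff_ext_lin.
  apply (filterdiff_comp' (U := R_NormedModule) (V := C_R_NormedModule) (W := R_NormedModule) f (fun z : C => snd z)).
  exact H. apply filterdiff_linear. apply (@is_linear_snd R_AbsRing R_NormedModule R_NormedModule).
  intros y. simpl. reflexivity.
Qed.

Lemma norm_CR (x : C) : @norm _ C_R_NormedModule x = Cmod x.
Proof. unfold norm. simpl. unfold prod_norm, Cmod. simpl. unfold norm; simpl. unfold abs; simpl.
  f_equal. rewrite !Rmult_1_r. rewrite <- !Rabs_mult. rewrite !Rabs_right; auto; apply Rle_ge; apply Rle_0_sqr. Qed.

Lemma is_derive_Cmult_l (f : R -> C) t D c :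
  is_derive (K := R_AbsRing) (V := C_R_NormedModule) f t D ->
  is_derive (K := R_AbsRing) (V := C_R_NormedModule) (fun s => Cmult c (f s)) t (Cmult c D).
Proof. unfold is_derive. intros H.
  eapply filterdiff_ext_lin.
  apply (filterdiff_comp' (U := R_NormedModule) (V := C_R_NormedModule) (W := C_R_NormedModule) f (fun z : C => Cmult c z)).
  exact H. apply filterdiff_linear. constructor.
  - intros x y. change (@eq C (Cmult c (Cplus x y)) (Cplus (Cmult c x) (Cmult c y))). ring.
  - intros k x. rewrite !scal_RC. cring.
  - exists (Cmod c + 1). split. pose proof (Cmod_ge_0 c). lra.
    intros x. rewrite !norm_CR, Cmod_mult. pose proof (Cmod_ge_0 x). nra.
  - intros y. simpl. rewrite !scal_RC. cring.
Qed.

Lemma Cmod_le_abs (z : C) : Cmod z <= Rabs (Re z) + Rabs (Im z).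
Proof. unfold Cmod. destruct z as [x y]; simpl.
  rewrite <- (sqrt_pow2 (Rabs x + Rabs y)) by (pose proof (Rabs_pos x); pose proof (Rabs_pos y); lra).
  apply sqrt_le_1_alt. 
  assert (E1 : x * (x * 1) = Rabs x * Rabs x) by (rewrite <- Rabs_mult, Rabs_right; [ring| apply Rle_ge, Rle_0_sqr]).
  assert (E2 : y * (y * 1) = Rabs y * Rabs y) by (rewrite <- Rabs_mult, Rabs_right; [ring| apply Rle_ge, Rle_0_sqr]).
  simpl. rewrite E1, E2.
  pose proof (Rabs_pos x); pose proof (Rabs_pos y). nra.
Qed.

Lemma filterlim_Re {T} (F : (T -> Prop) -> Prop) {FF : Filter F} (g : T -> C) z :
  filterlim g F (locally z) -> filterlim (fun t => Re (g t)) F (locally (Re z)).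
Proof. intros H. apply filterlim_locally. intros eps.
  apply (proj1 (filterlim_locally g z)) with (eps := eps) in H.
  eapply filter_imp; [|exact H]. intros x [H1 H2]. exact H1. Qed.

Lemma filterlim_Im {T} (F : (T -> Prop) -> Prop) {FF : Filter F} (g : T -> C) z :
  filterlim g F (locally z) -> filterlim (fun t => Im (g t)) F (locally (Im z)).
Proof. intros H. apply filterlim_locally. intros eps.
  apply (proj1 (filterlim_locally g z)) with (eps := eps) in H.
  eapply filter_imp; [|exact H]. intros x [H1 H2]. exact H2. Qed.

Definition clamp (lo hi x : R) := Rmax lo (Rmin hi x).

Lemma clamp_id lo hi x : lo <= x <= hi -> clamp lo hi x = x.
Proof. unfold clamp. intros. rewrite Rmin_right by lra. rewrite Rmax_right; lra. Qed.

Lemma clamp_in lo hi x : lo <= hi -> lo <= clamp lo hi x <= hi.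
Proof. unfold clamp. intros. unfold Rmax, Rmin. repeat destruct Rle_dec; lra. Qed.

Lemma filterlim_clamp lo hi x : lo <= x <= hi ->
  filterlim (clamp lo hi) (locally x) (within (fun y => lo <= y <= hi) (locally x)).
Proof. intros Hx P [eps HP]. exists eps. intros y Hy. apply HP.
  - change (Rabs (clamp lo hi y - x) < eps). change (Rabs (y - x) < eps) in Hy.
    unfold clamp, Rmax, Rmin in *. repeat destruct Rle_dec; unfold Rabs in *; repeat destruct Rcase_abs; lra.
  - apply clamp_in; lra.
Qed.

Lemma cont_clamp (f : R -> R) lo hi x :
  lo <= x <= hi ->
  filterlim f (within (fun y => lo <= y <= hi) (locally x)) (locally (f x)) ->
  continuity_pt (fun y => f (clamp lo hi y)) x.
Proof. intros Hx H. apply continuity_pt_filterlim.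
  rewrite clamp_id by auto.
  eapply filterlim_comp. apply filterlim_clamp; auto. exact H. Qed.

Lemma mvt_within (f df : R -> R) lo hi c s M :
  lo <= c -> c < s -> s <= hi ->
  (forall x, c < x < s -> is_derive f x (df x)) ->
  (forall x, lo <= x <= hi -> filterlim f (within (fun y => lo <= y <= hi) (locally x)) (locally (f x))) ->
  (forall x, c < x < s -> Rabs (df x) <= M) ->
  Rabs (f s - f c) <= M * (s - c).
Proof. intros H1 H2 H3 Hd Hc HM.
  assert (M0 : 0 <= M). { eapply Rle_trans. apply Rabs_pos. apply (HM ((c+s)/2)). lra. }
  set (g := fun y => f (clamp lo hi y)).
  set (dg := fun x => match Rlt_dec c x, Rlt_dec x s with left _, left _ => df x | _, _ => 0 end).
  destruct (MVT_gen g c s dg) as [xi [Hxi E]].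
  - rewrite Rmin_left, Rmax_right by lra. intros x Hx. unfold dg.
    destruct (Rlt_dec c x); [|lra]. destruct (Rlt_dec x s); [|lra].
    apply is_derive_ext_loc with f. 2: apply Hd; lra.
    apply locally_interval with c s. simpl; lra. simpl; lra.
    intros y Hy1 Hy2. simpl in *. unfold g. rewrite clamp_id; auto; lra.
  - rewrite Rmin_left, Rmax_right by lra. intros x Hx. apply cont_clamp. lra. apply Hc. lra.
  - unfold g in E. rewrite !clamp_id in E by lra. rewrite E. rewrite Rabs_mult.
    rewrite (Rabs_right (s - c)) by lra. apply Rmult_le_compat_r. lra.
    unfold dg. destruct (Rlt_dec c xi); [destruct (Rlt_dec xi s)|]; try (rewrite Rabs_R0; lra). apply HM. lra.
Qed.

Lemma cont_bound (f : R -> C) a b : a <= b -> cont_on a b f ->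
  exists M, 0 <= M /\ forall s, a <= s <= b -> Cmod (f s) <= M.
Proof. intros Hab Hf.
  assert (HR : forall (g : R -> R), (forall x, a <= x <= b -> filterlim g (within (fun y => a <= y <= b) (locally x)) (locally (g x))) ->
     exists M, 0 <= M /\ forall s, a <= s <= b -> Rabs (g s) <= M).
  { intros g Hg.
    destruct (continuity_ab_maj (fun y => g (clamp a b y)) a b Hab) as [x1 [Hx1 Hx1']].
    intros; apply cont_clamp; auto.
    destruct (continuity_ab_min (fun y => g (clamp a b y)) a b Hab) as [x2 [Hx2 Hx2']].
    intros; apply cont_clamp; auto.
    exists (Rabs (g (clamp a b x1)) + Rabs (g (clamp a b x2))). split.
    pose proof (Rabs_pos (g (clamp a b x1))); pose proof (Rabs_pos (g (clamp a b x2))); lra.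
    intros s Hs. specialize (Hx1 s Hs). specialize (Hx2 s Hs). simpl in *. rewrite (clamp_id a b s Hs) in Hx1, Hx2.
    unfold Rabs in *; repeat destruct Rcase_abs; lra. }
  destruct (HR (fun s => Re (f s))) as [M1 [HM1 H1]].
  { intros x Hx. apply filterlim_Re. apply within_filter, locally_filter. apply Hf; auto. }
  destruct (HR (fun s => Im (f s))) as [M2 [HM2 H2]].
  { intros x Hx. apply filterlim_Im. apply within_filter, locally_filter. apply Hf; auto. }
  exists (M1 + M2). split. lra. intros s Hs. eapply Rle_trans. apply Cmod_le_abs.
  specialize (H1 s Hs). specialize (H2 s Hs). simpl in *. lra.
Qed.

Lemma fin_bound (Q : nat -> R -> Prop) n :
  (forall j M M', M <= M' -> Q j M -> Q j M') ->
  (forall j, (j < n)%nat -> exists M, Q j M) ->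
  exists L, 0 <= L /\ forall j, (j < n)%nat -> Q j L.
Proof. intros Hmono. induction n; intros H.
  - exists 0. split. lra. intros; lia.
  - destruct IHn as [L [HL HL']]. intros; apply H; lia.
    destruct (H n ltac:(lia)) as [M HM].
    exists (Rmax L M). split. eapply Rle_trans; [exact HL| apply Rmax_l].
    intros j Hj. destruct (Nat.eq_dec j n).
    + subst. eapply Hmono; [apply Rmax_r|exact HM].
    + eapply Hmono; [apply Rmax_l|apply HL'; lia].
Qed.


Lemma im_le_Cmod' (z : C) : Rabs (Im z) <= Cmod z.
Proof. destruct z as [x y]. unfold Cmod; simpl. rewrite <- sqrt_Rsqr_abs. apply sqrt_le_1_alt.
  unfold Rsqr. pose proof (Rle_0_sqr x). unfold Rsqr in H. lra. Qed.

Lemma nat_unbounded r : exists n : nat, r < INR n.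
Proof. destruct (archimed r) as [H _]. exists (Z.to_nat (up r)).
  destruct (Z_le_gt_dec 0 (up r)).
  - rewrite INR_IZR_INZ, Z2Nat.id by lia. exact H.
  - replace (Z.to_nat (up r)) with 0%nat by lia. simpl.
    assert (IZR (up r) <= 0) by (apply IZR_le; lia). lra.
Qed.

Lemma INR_le_pow2 n : INR n <= 2 ^ n.
Proof. induction n. simpl; lra. rewrite S_INR. simpl.
  assert (1 <= 2 ^ n) by (apply pow_R1_Rle; lra). lra. Qed.

Lemma halving_zero x B0 : 0 <= x -> 0 <= B0 -> (forall n, x <= B0 / 2 ^ n) -> x = 0.
Proof. intros Hx HB H. destruct (Req_dec x 0); auto. exfalso.
  assert (Hx' : 0 < x) by lra.
  destruct (nat_unbounded (B0 / x)) as [n Hn].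
  specialize (H n). pose proof (INR_le_pow2 n).
  assert (0 < 2 ^ n) by (apply pow_lt; lra).
  assert (B0 < x * INR n). { apply (Rmult_lt_compat_l x) in Hn; auto. field_simplify in Hn; lra. }
  apply (Rmult_le_compat_r (2 ^ n)) in H; [|lra].
  field_simplify in H; [|lra]. nra.
Qed.

Lemma uniq_gen {Idx : Type} (I : Idx -> Prop) (w : Idx -> R -> C) a b dl L :
  0 < dl -> 0 <= L -> L * dl <= 1/4 ->
  (forall k, I k -> cont_on a b (w k)) ->
  (forall k, I k -> w k a = RtoC 0) ->
  (exists B0, 0 <= B0 /\ forall k s, I k -> a <= s <= b -> Cmod (w k s) <= B0) ->
  (forall t, a < t < b -> (forall p : nat, t <> a + INR p * dl) -> forall k, I k ->
     exists D, is_derive (K := R_AbsRing) (V := C_R_NormedModule) (w k) t D /\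
       forall B, 0 <= B -> (forall k' s, I k' -> a <= s <= t -> Cmod (w k' s) <= B) -> Cmod D <= L * B) ->
  forall k s, I k -> a <= s <= b -> w k s = RtoC 0.
Proof.
  intros Hdl HL HLdl Hc H0 [B0 [HB0 HB0']] Hd.
  assert (Step : forall p : nat, forall k s, I k -> a <= s <= b -> s <= a + INR p * dl -> w k s = RtoC 0).
  { induction p as [|p IHp]; intros k s Hk Hs Hsp.
    - simpl in Hsp. replace s with a by lra. auto.
    - set (c := a + INR p * dl) in *.
      assert (Hc0 : a <= c). { unfold c. pose proof (pos_INR p). nra. }
      assert (He : a + INR (S p) * dl = c + dl) by (unfold c; rewrite S_INR; ring).
      rewrite He in Hsp.
      assert (Hn : forall n : nat, forall k s, I k -> a <= s <= b -> s <= c + dl -> Cmod (w k s) <= B0 / 2 ^ n).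
      { induction n as [|n IHn]; intros k' s' Hk' Hs' Hsp'.
        - simpl. rewrite Rdiv_1_r. apply HB0'; auto.
        - set (B := B0 / 2 ^ n) in *.
          assert (HB : 0 <= B) by (unfold B; apply Rmult_le_pos; auto; left; apply Rinv_0_lt_compat, pow_lt; lra).
          replace (B0 / 2 ^ S n) with (B / 2) by (unfold B; simpl; field; apply pow_nonzero; lra).
          destruct (Rle_lt_dec s' c) as [Hsc|Hsc].
          + rewrite (IHp k' s' Hk' Hs' Hsc), Cmod_0. lra.
          + assert (Hwc : w k' c = RtoC 0) by (apply IHp; auto; lra).
            assert (Hder : forall x, c < x < s' -> exists D, is_derive (K := R_AbsRing) (V := C_R_NormedModule) (w k') x D /\ Cmod D <= L * B).
            { intros x Hx. destruct (Hd x ltac:(lra)) with (k := k') as [D [HD1 HD2]]; auto.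
              - intros p' E. assert (INR p < INR p' < INR (S p)).
                { rewrite S_INR. split; apply (Rmult_lt_reg_r dl); auto; unfold c in *; lra. }
                destruct H as [Ha Hb]. apply INR_lt in Ha. apply INR_lt in Hb. lia.
              - exists D. split; auto. apply HD2; auto. intros k'' s'' Hk'' Hs''. apply IHn; auto; lra. }
            assert (HRe : Rabs (Re (w k' s') - Re (w k' c)) <= L * B * (s' - c)).
            { apply (mvt_within (fun y => Re (w k' y)) (Derive (fun y => Re (w k' y))) a b); try lra.
              - intros x Hx. destruct (Hder x Hx) as [D [HD _]]. apply is_derive_Re in HD.
                apply Derive_correct. eexists; exact HD.
              - intros x Hx. apply filterlim_Re. apply within_filter, locally_filter. apply Hc; auto.
              - intros x Hx. destruct (Hder x Hx) as [D [HD HD']]. apply is_derive_Re in HD.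
                assert (E : Derive (fun y => Re (w k' y)) x = Re D) by (apply is_derive_unique; exact HD).
                rewrite E. eapply Rle_trans. apply re_le_Cmod. exact HD'. }
            assert (HIm : Rabs (Im (w k' s') - Im (w k' c)) <= L * B * (s' - c)).
            { apply (mvt_within (fun y => Im (w k' y)) (Derive (fun y => Im (w k' y))) a b); try lra.
              - intros x Hx. destruct (Hder x Hx) as [D [HD _]]. apply is_derive_Im in HD.
                apply Derive_correct. eexists; exact HD.
              - intros x Hx. apply filterlim_Im. apply within_filter, locally_filter. apply Hc; auto.
              - intros x Hx. destruct (Hder x Hx) as [D [HD HD']]. apply is_derive_Im in HD.
                assert (E : Derive (fun y => Im (w k' y)) x = Im D) by (apply is_derive_unique; exact HD).
                rewrite E. eapply Rle_trans. apply im_le_Cmod'. exact HD'. }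
            rewrite Hwc in HRe, HIm. simpl in HRe, HIm. rewrite Rminus_0_r in HRe, HIm.
            eapply Rle_trans. apply Cmod_le_abs.
            assert (L * B * (s' - c) <= B / 4).
            { assert (s' - c <= dl) by lra. assert (L * (s' - c) <= 1/4) by nra. nra. }
            lra. }
      apply Cmod_eq_0. apply (halving_zero _ B0); try apply Cmod_ge_0; auto. }
  intros k s Hk Hs. destruct (nat_unbounded ((b - a) / dl)) as [p Hp].
  apply (Step p); auto.
  apply (Rmult_lt_compat_r dl) in Hp; auto. field_simplify in Hp; lra.
Qed.


Lemma affine_within (f : R -> C) (al be x0 : R) (D D' : R -> Prop) :
  0 < al -> (forall x, D x -> D' (al * x + be)) ->
  filterlim f (within D' (locally (al * x0 + be))) (locally (f (al * x0 + be))) ->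
  filterlim (fun x => f (al * x + be)) (within D (locally x0)) (locally (f (al * x0 + be))).
Proof. intros Hal HD Hf. eapply filterlim_comp; [|exact Hf].
  intros P [eps HP]. assert (He : 0 < eps / al) by (apply Rdiv_lt_0_compat; [apply cond_pos|auto]).
  exists (mkposreal _ He). intros y Hy Dy. apply HP; auto.
  change (Rabs (al * y + be - (al * x0 + be)) < eps). change (Rabs (y - x0) < eps / al) in Hy.
  replace (al * y + be - (al * x0 + be)) with (al * (y - x0)) by ring.
  rewrite Rabs_mult, Rabs_right by lra.
  apply (Rmult_lt_compat_l al) in Hy; auto. field_simplify in Hy; lra.
Qed.

Lemma within_sub {T : UniformSpace} (f : T -> C) (D D' : T -> Prop) x l :
  (forall y, D y -> D' y) ->
  filterlim f (within D' (locally x)) l -> filterlim f (within D (locally x)) l.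
Proof. intros HD Hf P HP. specialize (Hf P HP). unfold filtermap, within in *.
  eapply filter_imp; [|exact Hf]. intros y H Dy. apply H, HD, Dy. Qed.

Lemma filterlim_Clin {T} (F : (T -> Prop) -> Prop) {FF : Filter F} (f g : T -> C) a b c1 c2 :
  filterlim f F (locally a) -> filterlim g F (locally b) ->
  filterlim (fun t => Cplus (Cmult c1 (f t)) (Cmult c2 (g t))) F (locally (Cplus (Cmult c1 a) (Cmult c2 b))).
Proof. intros Hf Hg.
  apply (filterlim_comp_2 (G := locally (Cmult c1 a)) (H := locally (Cmult c2 b)) (fun t => Cmult c1 (f t)) (fun t => Cmult c2 (g t)) (fun u v : C_NormedModule => @plus C_NormedModule u v)).
  - eapply filterlim_comp. exact Hf. apply (@filterlim_scal_r C_AbsRing C_NormedModule c1 a).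
  - eapply filterlim_comp. exact Hg. apply (@filterlim_scal_r C_AbsRing C_NormedModule c2 b).
  - apply (@filterlim_plus C_AbsRing C_NormedModule).
Qed.

Lemma filterlim_Cmult_l {T} (F : (T -> Prop) -> Prop) {FF : Filter F} (f : T -> C) a c :
  filterlim f F (locally a) -> filterlim (fun t => Cmult c (f t)) F (locally (Cmult c a)).
Proof. intros Hf. eapply filterlim_comp. exact Hf. apply (@filterlim_scal_r C_AbsRing C_NormedModule c a). Qed.

Lemma glue (g g1 g2 : R -> C) x0 lo hi :
  lo < x0 < hi ->
  (forall x, lo <= x <= x0 -> g x = g1 x) ->
  (forall x, x0 <= x <= hi -> g x = g2 x) ->
  filterlim g1 (within (fun x => lo <= x <= x0) (locally x0)) (locally (g x0)) ->
  filterlim g2 (within (fun x => x0 <= x <= hi) (locally x0)) (locally (g x0)) ->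
  filterlim g (locally x0) (locally (g x0)).
Proof. intros Hx E1 E2 H1 H2. apply filterlim_locally. intros eps.
  apply (proj1 (filterlim_locally _ _)) with (eps := eps) in H1.
  apply (proj1 (filterlim_locally _ _)) with (eps := eps) in H2.

  unfold within in H1, H2.
  assert (H3 : locally x0 (fun x => lo < x < hi)).
  { apply locally_interval with lo hi; simpl; try lra. auto. }
  generalize (filter_and _ _ H1 (filter_and _ _ H2 H3)). apply filter_imp.
  intros x [Ha [Hb Hc]]. destruct (Rle_lt_dec x x0).
  - rewrite (E1 x) by lra. apply Ha. lra.
  - rewrite (E2 x) by lra. apply Hb. lra.
Qed.


Lemma b_idx_Z N k : (0 < N)%nat -> Z.of_nat (b_idx N k) = (((k - 1) mod Z.of_nat N) + 1)%Z.
Proof. intros HN. unfold b_idx. pose proof (Z.mod_pos_bound (k-1) (Z.of_nat N) ltac:(lia)). lia. Qed.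

Lemma b_idx_range N k : (0 < N)%nat -> (1 <= b_idx N k <= N)%nat.
Proof. intros HN. pose proof (b_idx_Z N k HN). pose proof (Z.mod_pos_bound (k-1) (Z.of_nat N) ltac:(lia)). lia. Qed.

Lemma ab_decomp_Z N k : (0 < N)%nat ->
  (k = a_idx N k * Z.of_nat N + Z.of_nat (b_idx N k))%Z.
Proof. intros HN. rewrite b_idx_Z by auto. unfold a_idx.
  pose proof (Z.div_mod (k-1) (Z.of_nat N) ltac:(lia)). lia. Qed.

Lemma ab_decomp N k : (0 < N)%nat ->
  IZR k = IZR (a_idx N k) * INR N + INR (b_idx N k).
Proof. intros HN. rewrite (ab_decomp_Z N k HN) at 1. rewrite plus_IZR, mult_IZR, <- !INR_IZR_INZ. ring. Qed.

Lemma ab_shift N m c : (0 < N)%nat ->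
  a_idx N (m + c * Z.of_nat N) = (a_idx N m + c)%Z /\ b_idx N (m + c * Z.of_nat N) = b_idx N m.
Proof. intros HN. unfold a_idx, b_idx.
  replace (m + c * Z.of_nat N - 1)%Z with ((m - 1) + c * Z.of_nat N)%Z by ring.
  rewrite Z.div_add, Z.mod_add by lia. auto. Qed.

Lemma ab_comb N m k : (0 < N)%nat ->
  a_idx N (m - Z.of_nat (b_idx N m) + k) = (a_idx N m + a_idx N k)%Z /\
  b_idx N (m - Z.of_nat (b_idx N m) + k) = b_idx N k.
Proof. intros HN. pose proof (ab_decomp_Z N m HN).
  replace (m - Z.of_nat (b_idx N m) + k)%Z with (k + a_idx N m * Z.of_nat N)%Z by lia.
  destruct (ab_shift N k (a_idx N m) HN) as [E1 E2]. rewrite E1, E2. split; [ring|auto]. Qed.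

Lemma ab_succ N m : (0 < N)%nat ->
  ((b_idx N m < N)%nat /\ b_idx N (m + 1) = S (b_idx N m) /\ a_idx N (m + 1) = a_idx N m) \/
  (b_idx N m = N /\ b_idx N (m + 1) = 1%nat /\ a_idx N (m + 1) = (a_idx N m + 1)%Z).
Proof. intros HN. unfold a_idx, b_idx.
  replace (m + 1 - 1)%Z with m by ring.
  pose proof (Z.div_mod (m-1) (Z.of_nat N) ltac:(lia)) as E.
  pose proof (Z.mod_pos_bound (m-1) (Z.of_nat N) ltac:(lia)) as B.
  set (r := ((m - 1) mod Z.of_nat N)%Z) in *. set (q := ((m - 1) / Z.of_nat N)%Z) in *.
  destruct (Z.lt_ge_cases (r + 1) (Z.of_nat N)).
  - left. assert (Hr : (r + 1)%Z = (m mod Z.of_nat N)%Z) by (apply Z.mod_unique_pos with q; lia).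
    assert (Hq : q = (m / Z.of_nat N)%Z) by (apply Z.div_unique_pos with (r+1)%Z; lia).
    rewrite <- Hr, <- Hq. lia.
  - right. assert (Hr : 0%Z = (m mod Z.of_nat N)%Z) by (apply Z.mod_unique_pos with (q+1)%Z; lia).
    assert (Hq : (q+1)%Z = (m / Z.of_nat N)%Z) by (apply Z.div_unique_pos with 0%Z; lia).
    rewrite <- Hr, <- Hq. lia.
Qed.

Lemma ceil_spec t D : 0 < D -> IZR (ceil_div t D) - 1 < t / D <= IZR (ceil_div t D).
Proof. intros HD. unfold ceil_div. rewrite opp_IZR.
  destruct (base_Int_part (- (t / D))). lra. Qed.

Lemma ceil_unique t D m : 0 < D -> IZR m - 1 < t / D <= IZR m -> ceil_div t D = m.
Proof. intros HD H. unfold ceil_div.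
  assert (E : (- m)%Z = Int_part (- (t / D))) by (apply Int_part_spec; rewrite opp_IZR; lra).
  rewrite <- E. ring. Qed.

Lemma n_le h (n : nat -> nat) : n 0%nat = 0%nat ->
  (forall j, (1 <= j)%nat -> (j < h)%nat -> (n j < n (S j))%nat) ->
  forall j, (j <= h)%nat -> (n j <= n h)%nat.
Proof. intros H0 Hinc j Hj. destruct j. rewrite H0; lia.
  assert (forall k, (S j + k <= h)%nat -> (n (S j) <= n (S j + k))%nat).
  { induction k; intros Hk. rewrite Nat.add_0_r; lia.
    replace (S j + S k)%nat with (S (S j + k)) by lia.
    specialize (Hinc (S j + k)%nat ltac:(lia) ltac:(lia)). specialize (IHk ltac:(lia)). lia. }
  specialize (H (h - S j)%nat ltac:(lia)). replace (S j + (h - S j))%nat with h in H by lia. exact H.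
Qed.

Lemma smooth_cont f : smooth f -> forall t, continuity_pt f t.
Proof. intros Hs t. apply continuity_pt_filterlim. apply (ex_derive_continuous f t).
  exact (Hs 1%nat t). Qed.

Lemma real_bound (g : R -> R) lo hi : (forall t, continuity_pt g t) ->
  exists M, forall t, lo <= t <= hi -> Rabs (g t) <= M.
Proof. intros Hg. destruct (Rle_lt_dec lo hi) as [Hab|Hab].
  - destruct (continuity_ab_maj g lo hi Hab) as [x1 [Hx1 _]]. intros; apply Hg.
    destruct (continuity_ab_min g lo hi Hab) as [x2 [Hx2 _]]. intros; apply Hg.
    exists (Rabs (g x1) + Rabs (g x2)). intros s Hs. specialize (Hx1 s Hs). specialize (Hx2 s Hs).
    unfold Rabs in *; repeat destruct Rcase_abs; lra.
  - exists 0. intros; lra.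
Qed.

Lemma A_bound d h (A : nat -> R -> nat -> nat -> R) lo hi :
  (forall j i k, (j <= h)%nat -> (i < d)%nat -> (k < d)%nat -> forall t, continuity_pt (fun t => A j t i k) t) ->
  exists LA, 0 <= LA /\ forall j i k t, (j <= h)%nat -> (i < d)%nat -> (k < d)%nat -> lo <= t <= hi -> Rabs (A j t i k) <= LA.
Proof. intros HA.
  assert (Hmono : forall (P : R -> Prop) , True) by auto.
  destruct (fin_bound (fun j M => forall i k t, (i < d)%nat -> (k < d)%nat -> lo <= t <= hi -> Rabs (A j t i k) <= M) (S h)) as [L [HL HL']].
  - intros j M M' HM H i k t Hi Hk Ht. specialize (H i k t Hi Hk Ht). lra.
  - intros j Hj.
    destruct (fin_bound (fun i M => forall k t, (k < d)%nat -> lo <= t <= hi -> Rabs (A j t i k) <= M) d) as [L1 [HL1 HL1']].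
    + intros i M M' HM H k t Hk Ht. specialize (H k t Hk Ht). lra.
    + intros i Hi.
      destruct (fin_bound (fun k M => forall t, lo <= t <= hi -> Rabs (A j t i k) <= M) d) as [L2 [HL2 HL2']].
      * intros k M M' HM H t Ht. specialize (H t Ht). lra.
      * intros k Hk. apply real_bound. apply HA; lia.
      * exists L2. intros k t Hk Ht. apply HL2'; auto.
    + exists L1. intros i k t Hi Hk Ht. apply HL1'; auto.
  - exists L. split; auto. intros j i k t Hj Hi Hk Ht. apply HL'; auto. lia.
Qed.

Lemma A_per_nat N Delta (A : nat -> R -> nat -> nat -> R) j i k :
  (forall t, A j (t + INR N * Delta) i k = A j t i k) ->
  forall (p : nat) t, A j (t + INR p * (INR N * Delta)) i k = A j t i k.
Proof. intros H p. induction p; intros t. simpl. rewrite Rmult_0_l, Rplus_0_r. auto.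
  rewrite S_INR. replace (t + (INR p + 1) * (INR N * Delta)) with ((t + INR p * (INR N * Delta)) + INR N * Delta) by ring.
  rewrite H. auto. Qed.

Lemma A_per_Z N Delta (A : nat -> R -> nat -> nat -> R) j i k :
  (forall t, A j (t + INR N * Delta) i k = A j t i k) ->
  forall (p : Z) t, A j (t + IZR p * (INR N * Delta)) i k = A j t i k.
Proof. intros H p t. destruct (Z_le_gt_dec 0 p).
  - rewrite <- (Z2Nat.id p) by lia. rewrite <- INR_IZR_INZ. apply A_per_nat; auto.
  - set (p' := Z.to_nat (- p)).
    assert (E : IZR p = - INR p').
    { unfold p'. rewrite INR_IZR_INZ, Z2Nat.id by lia. rewrite opp_IZR, Ropp_involutive. auto. }
    rewrite E. rewrite <- (A_per_nat N Delta A j i k H p' (t + - INR p' * (INR N * Delta))).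
    f_equal. ring.
Qed.


Definition rhs d h (n : nat -> nat) Delta (A : nat -> R -> nat -> nat -> R) (x : R -> nat -> C) t i :=
  csum (S h) (fun j => csum d (fun k => Cmult (RtoC (A j t i k)) (x (t - INR (n j) * Delta) k))).

Lemma rhs_minus d h n Delta A x1 x2 t i :
  Cminus (rhs d h n Delta A x1 t i) (rhs d h n Delta A x2 t i) =
  rhs d h n Delta A (fun s k => Cminus (x1 s k) (x2 s k)) t i.
Proof. unfold rhs. rewrite csum_minus. apply csum_ext. intros j _.
  rewrite csum_minus. apply csum_ext. intros k _. ring. Qed.

Lemma rhs_bound d h n Delta A x t i LA B :
  0 <= LA ->
  (forall j k, (j <= h)%nat -> (k < d)%nat -> Rabs (A j t i k) <= LA /\ Cmod (x (t - INR (n j) * Delta) k) <= B) ->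
  Cmod (rhs d h n Delta A x t i) <= INR (S h) * (INR d * (LA * B)).
Proof. intros HLA H. unfold rhs. apply Cmod_csum_le. intros j Hj.
  apply Cmod_csum_le. intros k Hk. destruct (H j k ltac:(lia) Hk) as [H1 H2].
  rewrite Cmod_mult, Cmod_R. pose proof (Cmod_ge_0 (x (t - INR (n j) * Delta) k)).
  pose proof (Rabs_pos (A j t i k)). nra. Qed.

Lemma filterlim_Cminus {T} (F : (T -> Prop) -> Prop) {FF : Filter F} (f g : T -> C) a b :
  filterlim f F (locally a) -> filterlim g F (locally b) ->
  filterlim (fun t => Cminus (f t) (g t)) F (locally (Cminus a b)).
Proof. intros Hf Hg.
  assert (E : Cminus a b = Cplus (Cmult 1 a) (Cmult (-1) b)) by ring. rewrite E.
  eapply filterlim_ext; [|apply (filterlim_Clin F f g a b 1 (-1) Hf Hg)].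
  intros t. simpl. ring. Qed.

Lemma within_of_locally (f : R -> C) (D : R -> Prop) x :
  filterlim f (locally x) (locally (f x)) -> filterlim f (within D (locally x)) (locally (f x)).
Proof. intros H P HP. specialize (H P HP). unfold within, filtermap in *.
  eapply filter_imp; [|exact H]. auto. Qed.

Lemma Cminus_eq0 a b : Cminus a b = RtoC 0 -> a = b.
Proof. intros H. replace a with (Cplus (Cminus a b) b) by ring. rewrite H. ring. Qed.

Lemma dde_uniq d h (n : nat -> nat) Delta (A : nat -> R -> nat -> nat -> R) (x1 x2 : R -> nat -> C) :
  0 < Delta ->
  (forall j, (j <= h)%nat -> (n j <= n h)%nat) ->
  (forall j i k, (j <= h)%nat -> (i < d)%nat -> (k < d)%nat -> forall t, continuity_pt (fun t => A j t i k) t) ->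
  (forall i, (i < d)%nat -> cont_from (- (INR (n h) * Delta)) (fun t => x1 t i)) ->
  (forall i, (i < d)%nat -> cont_from (- (INR (n h) * Delta)) (fun t => x2 t i)) ->
  (forall i, (i < d)%nat -> forall t, - (INR (n h) * Delta) <= t <= 0 -> x1 t i = x2 t i) ->
  (forall t, 0 < t -> (forall p : nat, t <> INR p * Delta) -> forall i, (i < d)%nat ->
      is_derive (K := R_AbsRing) (V := C_R_NormedModule) (fun s => x1 s i) t (rhs d h n Delta A x1 t i) /\
      is_derive (K := R_AbsRing) (V := C_R_NormedModule) (fun s => x2 s i) t (rhs d h n Delta A x2 t i)) ->
  forall i, (i < d)%nat -> forall t, - (INR (n h) * Delta) <= t -> x1 t i = x2 t i.
Proof.
  intros HD Hnle HA Hc1 Hc2 H0 Hd i Hi t Ht.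
  assert (Hth : 0 <= INR (n h) * Delta) by (pose proof (pos_INR (n h)); nra).
  destruct (Rle_lt_dec t 0) as [Ht0|Ht0]. { apply H0; auto. }
  set (K := t + 1).
  destruct (A_bound d h A 0 K HA) as [LA [HLA HLA']].
  set (L := INR (S h) * (INR d * LA)).
  assert (HL : 0 <= L) by (unfold L; pose proof (pos_INR (S h)); pose proof (pos_INR d); apply Rmult_le_pos; auto; apply Rmult_le_pos; auto).
  destruct (nat_unbounded (4 * L * Delta)) as [M0 HM0].
  set (M := S M0).
  assert (HM : 0 < INR M) by (unfold M; apply lt_0_INR; lia).
  assert (HM' : INR M0 < INR M) by (unfold M; apply lt_INR; lia).
  set (dl := Delta / INR M).
  assert (Hdl : 0 < dl) by (unfold dl; apply Rdiv_lt_0_compat; auto).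
  assert (HLdl : L * dl <= 1/4).
  { unfold dl. apply (Rmult_le_reg_r (INR M)); auto. field_simplify; [|lra]. lra. }
  assert (Hw := uniq_gen (fun k => (k < d)%nat) (fun k s => Cminus (x1 s k) (x2 s k)) 0 K dl L Hdl HL HLdl).
  apply Cminus_eq0. apply Hw; auto; [| | | | unfold K; lra].
  - intros k Hk s Hs. apply filterlim_Cminus. apply within_filter, locally_filter.
    + apply (within_sub _ _ (fun s => - (INR (n h) * Delta) <= s)). intros; lra. apply Hc1; auto; lra.
    + apply (within_sub _ _ (fun s => - (INR (n h) * Delta) <= s)). intros; lra. apply Hc2; auto; lra.
  - intros k Hk. rewrite (H0 k Hk 0) by lra. ring.
  - destruct (fin_bound (fun k M => forall s, 0 <= s <= K -> Cmod (Cminus (x1 s k) (x2 s k)) <= M) d) as [B0 [HB0 HB0']].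
    + intros k M1 M2 H12 H s Hs. specialize (H s Hs). lra.
    + intros k Hk. destruct (cont_bound (fun s => Cminus (x1 s k) (x2 s k)) 0 K) as [B [_ HB]].
      unfold K; lra.
      intros s Hs. apply filterlim_Cminus. apply within_filter, locally_filter.
      * apply (within_sub _ _ (fun s => - (INR (n h) * Delta) <= s)). intros; lra. apply Hc1; auto; lra.
      * apply (within_sub _ _ (fun s => - (INR (n h) * Delta) <= s)). intros; lra. apply Hc2; auto; lra.
      * exists B. exact HB.
    + exists B0. split; [exact HB0|]. intros k0 s0 Hk0 Hs0. exact (HB0' k0 Hk0 s0 Hs0).
  - intros t' Ht' Hgrid k Hk.
    assert (Hg : forall p : nat, t' <> INR p * Delta).
    { intros p E. apply (Hgrid (p * M)%nat). rewrite E, mult_INR. unfold dl. field. lra. }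
    destruct (Hd t' ltac:(lra) Hg k Hk) as [D1 D2].
    exists (Cminus (rhs d h n Delta A x1 t' k) (rhs d h n Delta A x2 t' k)). split.
    + apply (is_derive_minus (fun s => x1 s k) (fun s => x2 s k)); auto.
    + intros B HB HBs. rewrite rhs_minus. unfold L. rewrite !Rmult_assoc. apply rhs_bound; auto.
      intros j l Hj Hl. split. apply HLA'; auto. lra.
      destruct (Rle_lt_dec 0 (t' - INR (n j) * Delta)).
      * apply HBs; auto. pose proof (pos_INR (n j)). nra.
      * rewrite (H0 l Hl). unfold Cminus. rewrite Cplus_opp_r, Cmod_0. auto.
        split; [|lra]. assert (INR (n j) <= INR (n h)) by (apply le_INR; auto). nra.
Qed.


Lemma cont_from_shift lo (f : R -> C) c : 0 <= c -> cont_from lo f -> cont_from lo (fun t => f (c + t)).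
Proof. intros Hc Hf t Ht.
  apply (filterlim_ext (fun s => f (1 * s + c))). intros; f_equal; ring.
  replace (c + t) with (1 * t + c) by ring. apply affine_within with (D' := fun s => lo <= s). lra.
  intros; lra. apply Hf. lra. Qed.

Lemma cont_from_mult lo (f : R -> C) c : cont_from lo f -> cont_from lo (fun t => Cmult c (f t)).
Proof. intros Hf t Ht. apply filterlim_Cmult_l. apply within_filter, locally_filter. apply Hf; auto. Qed.

Lemma Cmult_1_l' (z : C) : Cmult (RtoC 1) z = z.
Proof. ring. Qed.

Lemma is_derive_shift (f : R -> C) c t D :
  is_derive (K := R_AbsRing) (V := C_R_NormedModule) f (c + t) D ->
  is_derive (K := R_AbsRing) (V := C_R_NormedModule) (fun s => f (c + s)) t D.
Proof. intros H.
  assert (Hg : is_derive (fun s : R => c + s) t 1) by (auto_derive; auto; ring).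
  generalize (is_derive_comp f (fun s : R => c + s) t D 1 H Hg). rewrite scal_RC.
  rewrite Cmult_1_l'. auto. Qed.

Lemma is_derive_aff (f : R -> C) al be t D :
  is_derive (K := R_AbsRing) (V := C_R_NormedModule) f ((t + be) * al) D ->
  is_derive (K := R_AbsRing) (V := C_R_NormedModule) (fun s => f ((s + be) * al)) t (Cmult (RtoC al) D).
Proof. intros H.
  assert (Hg : is_derive (fun s : R => (s + be) * al) t al) by (auto_derive; auto; ring).
  generalize (is_derive_comp f (fun s : R => (s + be) * al) t D al H Hg). rewrite scal_RC. auto. Qed.


Lemma part1_shift d N h n Delta A mu phi x :
  0 < Delta -> n 0%nat = 0%nat ->
  (forall j, (1 <= j)%nat -> (j < h)%nat -> (n j < n (S j))%nat) ->
  (forall j i k, (j <= h)%nat -> (i < d)%nat -> (k < d)%nat -> smooth (fun t => A j t i k)) ->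
  (forall j i k t, (j <= h)%nat -> (i < d)%nat -> (k < d)%nat -> A j (t + INR N * Delta) i k = A j t i k) ->
  dde_sol d h n Delta A phi x ->
  monodromy_eig d N h n Delta mu phi x ->
  forall i, (i < d)%nat -> forall t, - (INR (n h) * Delta) <= t ->
    x (INR N * Delta + t) i = Cmult mu (x t i).
Proof.
  intros HD Hn0 Hninc Hsm Hper [Hx0 [Hxc Hxd]] Hmon.
  assert (HN0 : 0 <= INR N * Delta) by (pose proof (pos_INR N); nra).
  apply (dde_uniq d h n Delta A (fun t i => x (INR N * Delta + t) i) (fun t i => Cmult mu (x t i))); auto.
  - apply n_le; auto.
  - intros; apply smooth_cont; auto.
  - intros i Hi. apply (cont_from_shift _ (fun t => x t i)); auto.
  - intros i Hi. apply (cont_from_mult _ (fun t => x t i)); auto.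
  - intros i Hi t Ht. rewrite Hmon, Hx0; auto.
  - intros t Ht _ i Hi. split.
    + apply (is_derive_shift (fun s => x s i)).
      assert (E : rhs d h n Delta A (fun t i => x (INR N * Delta + t) i) t i =
        csum (S h) (fun j => csum d (fun k => Cmult (RtoC (A j (INR N * Delta + t) i k)) (x (INR N * Delta + t - INR (n j) * Delta) k)))).
      { unfold rhs. apply csum_ext. intros j Hj. apply csum_ext. intros k Hk.
        rewrite (Rplus_comm (INR N * Delta) t), Hper by lia. f_equal. f_equal. ring. }
      rewrite E. apply Hxd; auto. nra.
    + assert (E : rhs d h n Delta A (fun t i => Cmult mu (x t i)) t i = Cmult mu (rhs d h n Delta A x t i)).
      { unfold rhs. rewrite csum_mult_l. apply csum_ext. intros j Hj. rewrite csum_mult_l.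
        apply csum_ext. intros k Hk. ring. }
      rewrite E. apply is_derive_Cmult_l. apply Hxd; auto.
Qed.

Lemma shift_nat (x : R -> C) mu T lo : 0 <= T ->
  (forall t, lo <= t -> x (T + t) = Cmult mu (x t)) ->
  forall (p : nat) t, lo <= t -> x (t + INR p * T) = Cmult (cpow mu p) (x t).
Proof. intros HT H p. induction p; intros t Ht.
  - simpl. rewrite Rmult_0_l, Rplus_0_r. ring.
  - rewrite S_INR. replace (t + (INR p + 1) * T) with (T + (t + INR p * T)) by ring.
    rewrite H. rewrite IHp by auto. simpl. ring.
    pose proof (pos_INR p). nra.
Qed.

Lemma shift_Z (x : R -> C) mu T lo : 0 <= T -> mu <> RtoC 0 ->
  (forall t, lo <= t -> x (T + t) = Cmult mu (x t)) ->
  forall (p : Z) t, lo <= t -> lo <= t + IZR p * T -> x (t + IZR p * T) = Cmult (czpow mu p) (x t).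
Proof. intros HT Hmu H p t Ht Ht'. unfold czpow. destruct (Z.leb_spec 0 p).
  - rewrite <- (Z2Nat.id p) at 1 by lia. rewrite <- INR_IZR_INZ. apply (shift_nat x mu T lo); auto.
  - set (p' := Z.to_nat (- p)).
    assert (E : IZR p = - INR p').
    { unfold p'. rewrite INR_IZR_INZ, Z2Nat.id by lia. rewrite opp_IZR, Ropp_involutive. auto. }
    assert (E2 := shift_nat x mu T lo HT H p' (t + IZR p * T) Ht').
    replace (t + IZR p * T + INR p' * T) with t in E2 by (rewrite E; ring).
    rewrite E2. field. apply cpow_nz; auto.
Qed.

Lemma Cminus_mult_l c a b : Cminus (Cmult c a) (Cmult c b) = Cmult c (Cminus a b).
Proof. ring. Qed.

Lemma Amat_minus d N h n Delta A s mu q1 q2 nb i :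
  Cminus (Amat_app d N h n Delta A s mu q1 nb i) (Amat_app d N h n Delta A s mu q2 nb i) =
  Amat_app d N h n Delta A s mu (fun b l => Cminus (q1 b l) (q2 b l)) nb i.
Proof. unfold Amat_app. cbv zeta. 
  rewrite Cminus_mult_l.
  f_equal. rewrite csum_minus. apply csum_ext. intros j _.
  rewrite csum_minus. apply csum_ext. intros k _. ring. Qed.

Lemma Amat_bound d N h n Delta A s mu w nb i LA CZ B :
  0 < Delta -> 0 <= LA -> 0 <= CZ ->
  (forall j l, (j <= h)%nat -> (l < d)%nat ->
     Rabs (A j ((s + INR nb - 1) * Delta) i l) <= LA /\
     Cmod (czpow mu (a_idx N (Z.of_nat nb - Z.of_nat (n j)))) <= CZ /\
     Cmod (w (b_idx N (Z.of_nat nb - Z.of_nat (n j))) l) <= B) ->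
  Cmod (Amat_app d N h n Delta A s mu w nb i) <= Delta * (INR (S h) * (INR d * (LA * (CZ * B)))).
Proof. intros HD HLA HCZ H. unfold Amat_app. cbv zeta. rewrite Cmod_mult, Cmod_R, Rabs_right by lra.
  apply Rmult_le_compat_l. lra. apply Cmod_csum_le. intros j Hj. apply Cmod_csum_le. intros l Hl.
  destruct (H j l ltac:(lia) Hl) as [H1 [H2 H3]].
  rewrite !Cmod_mult, Cmod_R.
  pose proof (Cmod_ge_0 (czpow mu (a_idx N (Z.of_nat nb - Z.of_nat (n j))))).
  pose proof (Cmod_ge_0 (w (b_idx N (Z.of_nat nb - Z.of_nat (n j))) l)).
  pose proof (Rabs_pos (A j ((s + INR nb - 1) * Delta) i l)).
  apply Rmult_le_compat; auto. apply Rmult_le_pos; auto. apply Rmult_le_compat; auto.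
Qed.


Lemma part1 d N h n Delta A mu phi x :
  0 < Delta -> (0 < N)%nat -> n 0%nat = 0%nat ->
  (forall j, (1 <= j)%nat -> (j < h)%nat -> (n j < n (S j))%nat) ->
  (forall j i k, (j <= h)%nat -> (i < d)%nat -> (k < d)%nat -> smooth (fun t => A j t i k)) ->
  (forall j i k t, (j <= h)%nat -> (i < d)%nat -> (k < d)%nat -> A j (t + INR N * Delta) i k = A j t i k) ->
  mu <> RtoC 0 ->
  dde_sol d h n Delta A phi x ->
  monodromy_eig d N h n Delta mu phi x ->
  charmat_kernel d N h n Delta A mu (fun nb i => x ((INR nb - 1) * Delta) i).
Proof.
  intros HD HN Hn0 Hninc Hsm Hper Hmu Hdde Hmon.
  pose proof Hdde as [Hx0 [Hxc Hxd]].
  assert (Hsh := part1_shift d N h n Delta A mu phi x HD Hn0 Hninc Hsm Hper Hdde Hmon).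
  assert (HT : 0 <= INR N * Delta) by (pose proof (pos_INR N); nra).
  assert (Hth : 0 <= INR (n h) * Delta) by (pose proof (pos_INR (n h)); nra).
  assert (Hnle := n_le h n Hn0 Hninc).
  assert (Hint : forall i, (i < d)%nat -> forall p t, - (INR (n h) * Delta) <= t -> - (INR (n h) * Delta) <= t + IZR p * (INR N * Delta) ->
             x (t + IZR p * (INR N * Delta)) i = Cmult (czpow mu p) (x t i)).
  { intros i Hi p t H1 H2. apply (shift_Z (fun t => x t i) mu (INR N * Delta) (- (INR (n h) * Delta))); auto. }
  set (qs := fun s nb i => x ((s + INR nb - 1) * Delta) i).
  assert (Hqs_der : forall nb i, (1 <= nb <= N)%nat -> (i < d)%nat -> forall s, 0 < s < 1 ->
     is_derive (K := R_AbsRing) (V := C_R_NormedModule) (fun r => qs r nb i) s (Amat_app d N h n Delta A s mu (qs s) nb i)).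
  { intros nb i Hnb Hi s Hs. unfold qs.
    apply (is_derive_ext (fun r => x ((r + (INR nb - 1)) * Delta) i)). intros; f_equal; ring.
    assert (E : Amat_app d N h n Delta A s mu (fun nb i => x ((s + INR nb - 1) * Delta) i) nb i =
                Cmult (RtoC Delta) (rhs d h n Delta A x ((s + (INR nb - 1)) * Delta) i)).
    { unfold Amat_app, rhs. cbv zeta. f_equal. apply csum_ext. intros j Hj. apply csum_ext. intros l Hl.
      replace ((s + (INR nb - 1)) * Delta) with ((s + INR nb - 1) * Delta) by ring. f_equal.
      set (k := (Z.of_nat nb - Z.of_nat (n j))%Z).
      assert (Hk : IZR k = INR nb - INR (n j)) by (unfold k; rewrite minus_IZR, <- !INR_IZR_INZ; auto).
      assert (Hab := ab_decomp N k HN). pose proof (b_idx_range N k HN) as Hb.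
      assert (Hb1 : 1 <= INR (b_idx N k)) by (apply (le_INR 1); lia).
      assert (Hnj : INR (n j) <= INR (n h)) by (apply le_INR; apply Hnle; lia).
      assert (Hnb1 : 1 <= INR nb) by (apply (le_INR 1); lia).
      rewrite <- Hint by (auto; nra).
      f_equal. rewrite Hab in Hk.
      replace (INR nb) with (IZR (a_idx N k) * INR N + INR (b_idx N k) + INR (n j)) by lra. ring. }
    rewrite E. apply (is_derive_aff (fun u => x u i) Delta (INR nb - 1) s).
    assert (Hpos : 0 < (s + (INR nb - 1)) * Delta).
    { assert (1 <= INR nb) by (apply (le_INR 1); lia). nra. }
    exact (Hxd i Hi _ Hpos). }
  intros q [Hq0 [Hqc Hqd]] nb i Hnb Hi.
  destruct (A_bound d h A 0 (INR N * Delta)) as [LA [HLA HLA']].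
  { intros; apply smooth_cont; auto. }
  destruct (fin_bound (fun nb M => forall j, (j < S h)%nat -> Cmod (czpow mu (a_idx N (Z.of_nat nb - Z.of_nat (n j)))) <= M) (S N)) as [CZ [HCZ HCZ']].
  { intros j M1 M2 H12 H l Hl. specialize (H l Hl). lra. }
  { intros nb' Hnb'. destruct (fin_bound (fun j M => Cmod (czpow mu (a_idx N (Z.of_nat nb' - Z.of_nat (n j)))) <= M) (S h)) as [M [_ HM]].
    intros j M1 M2 H12 H. lra. intros j Hj. eexists; apply Rle_refl. exists M; auto. }
  set (L := Delta * (INR (S h) * (INR d * (LA * CZ)))).
  assert (HL : 0 <= L).
  { unfold L. pose proof (pos_INR (S h)); pose proof (pos_INR d).
    repeat apply Rmult_le_pos; lra. }
  set (dl := 1 / (4 * L + 4)).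
  assert (Hdl : 0 < dl) by (unfold dl; apply Rdiv_lt_0_compat; lra).
  assert (HLdl : L * dl <= 1/4).
  { unfold dl. apply (Rmult_le_reg_r (4 * L + 4)). lra. field_simplify; lra. }
  assert (Hcqs : forall nb i, (1 <= nb <= N)%nat -> (i < d)%nat -> cont_on 0 1 (fun s => qs s nb i)).
  { intros nb' i' Hnb' Hi' s0 Hs0.
    replace (qs s0 nb' i') with (x (Delta * s0 + (INR nb' - 1) * Delta) i') by (unfold qs; f_equal; ring).
    apply (filterlim_ext (fun s => x (Delta * s + (INR nb' - 1) * Delta) i')). intros; unfold qs; f_equal; ring.
    apply (affine_within (fun u => x u i') Delta ((INR nb' - 1) * Delta) s0 (fun s => 0 <= s <= 1) (fun u => - (INR (n h) * Delta) <= u)). auto.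
    intros s Hs. assert (1 <= INR nb') by (apply (le_INR 1); lia). nra.
    apply Hxc; auto. assert (1 <= INR nb') by (apply (le_INR 1); lia). nra. }
  assert (Hw := uniq_gen (fun p => (1 <= fst p <= N)%nat /\ (snd p < d)%nat)
     (fun p s => Cminus (q s (fst p) (snd p)) (qs s (fst p) (snd p))) 0 1 dl L Hdl HL HLdl).
  assert (Heq : q 1 nb i = qs 1 nb i).
  { apply Cminus_eq0. refine (Hw _ _ _ _ (nb, i) 1 _ _); [ | | | | simpl; auto | lra].
    - intros [nb' i'] [Hnb' Hi']; cbn [fst snd] in *. intros s0 Hs0. apply filterlim_Cminus. apply within_filter, locally_filter.
      apply Hqc; auto. apply Hcqs; auto.
    - intros [nb' i'] [Hnb' Hi']; cbn [fst snd] in *. rewrite Hq0 by auto. unfold qs.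
      replace ((0 + INR nb' - 1) * Delta) with ((INR nb' - 1) * Delta) by ring. ring.
    - destruct (fin_bound (fun nb M => (1 <= nb)%nat -> forall i, (i < d)%nat -> forall s, 0 <= s <= 1 -> Cmod (Cminus (q s nb i) (qs s nb i)) <= M) (S N)) as [B0 [HB0 HB0']].
      + intros j M1 M2 H12 H Hj l Hl s Hs. specialize (H Hj l Hl s Hs). lra.
      + intros nb' Hnb'. destruct (le_lt_dec 1 nb') as [H1|H1]; [|exists 0; intros; lia].
        destruct (fin_bound (fun i M => forall s, 0 <= s <= 1 -> Cmod (Cminus (q s nb' i) (qs s nb' i)) <= M) d) as [M [_ HM]].
        * intros j M1 M2 H12 H s Hs. specialize (H s Hs). lra.
        * intros i' Hi'. destruct (cont_bound (fun s => Cminus (q s nb' i') (qs s nb' i')) 0 1) as [M [_ HM]]. lra.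
          intros s0 Hs0. apply filterlim_Cminus. apply within_filter, locally_filter.
          apply Hqc; auto; lia. apply Hcqs; auto; lia. exists M; auto.
        * exists M. intros _. auto.
      + exists B0. split; [exact HB0|]. intros [nb' i'] s [Hnb' Hi'] Hs; cbn [fst snd] in *. apply HB0'; auto; lia.
    - intros t Ht _ [nb' i'] [Hnb' Hi']; cbn [fst snd] in *.
      exists (Cminus (Amat_app d N h n Delta A t mu (q t) nb' i') (Amat_app d N h n Delta A t mu (qs t) nb' i')).
      split.
      + apply (is_derive_minus (fun s => q s nb' i') (fun s => qs s nb' i')). apply Hqd; auto. apply Hqs_der; auto.
      + intros B HB HBs. rewrite Amat_minus.
        assert (EL : L * B = Delta * (INR (S h) * (INR d * (LA * (CZ * B))))) by (unfold L; ring).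
        rewrite EL.
        apply Amat_bound; auto. intros j l Hj Hl. split; [|split].
        * apply HLA'; auto. assert (1 <= INR nb') by (apply (le_INR 1); lia).
          assert (INR nb' <= INR N) by (apply le_INR; lia). nra.
        * apply HCZ'; lia.
        * apply (HBs (b_idx N (Z.of_nat nb' - Z.of_nat (n j)), l)). simpl. split; auto. apply b_idx_range; auto. lra. }
  rewrite Heq. unfold qs, Bmat_app.
  destruct (Nat.ltb_spec nb N).
  - rewrite S_INR. f_equal. ring.
  - assert (nb = N) by lia. subst nb. simpl.
    replace ((1 + INR N - 1) * Delta) with (INR N * Delta + 0) by ring.
    rewrite Hsh; auto; [|lra]. f_equal. f_equal. ring.
Qed.


Definition Yf N mu (q : R -> nat -> nat -> C) (m : Z) (s : R) (i : nat) : C :=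
  Cmult (czpow mu (a_idx N m)) (q s (b_idx N m) i).

Lemma Y_jump d N h n Delta A mu v q m i :
  (0 < N)%nat -> mu <> RtoC 0 -> (i < d)%nat ->
  ode_sol d N h n Delta A mu v q ->
  (forall nb i, (1 <= nb <= N)%nat -> (i < d)%nat -> q 1 nb i = Bmat_app N mu v nb i) ->
  Yf N mu q (m - 1) 1 i = Yf N mu q m 0 i.
Proof. intros HN Hmu Hi [Hq0 _] HB. unfold Yf.
  pose proof (b_idx_range N (m-1) HN) as Hr.
  destruct (ab_succ N (m - 1) HN) as [[H1 [H2 H3]]|[H1 [H2 H3]]];
    replace (m - 1 + 1)%Z with m in * by ring.
  - rewrite H2, H3, HB by (auto; lia). unfold Bmat_app.
    destruct (Nat.ltb_spec (b_idx N (m-1)) N); [|lia]. rewrite Hq0 by (auto; lia). auto.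
  - rewrite H2, H3, HB by (auto; lia). rewrite H1. unfold Bmat_app.
    destruct (Nat.ltb_spec N N); [lia|]. rewrite Hq0 by (auto; lia). rewrite czpow_succ by auto. ring.
Qed.

Lemma y_repr d N h n Delta A mu v q i :
  0 < Delta -> (0 < N)%nat -> mu <> RtoC 0 -> (i < d)%nat ->
  ode_sol d N h n Delta A mu v q ->
  (forall nb i, (1 <= nb <= N)%nat -> (i < d)%nat -> q 1 nb i = Bmat_app N mu v nb i) ->
  forall t m, IZR m - 1 <= t / Delta <= IZR m ->
  phi_of_q N Delta mu q t i = Yf N mu q m (t / Delta - (IZR m - 1)) i.
Proof. intros HD HN Hmu Hi Hq HB t m Hm. unfold phi_of_q. cbv zeta.
  destruct (Req_dec (t / Delta) (IZR m - 1)) as [E|E].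
  - assert (Hc : ceil_div t Delta = (m - 1)%Z) by (apply ceil_unique; auto; rewrite minus_IZR; lra).
    rewrite Hc. rewrite E. rewrite minus_IZR.
    replace (IZR m - 1 - (IZR m - 1 - 1)) with 1 by ring. replace (IZR m - 1 - (IZR m - 1)) with 0 by ring.
    apply (Y_jump d N h n Delta A mu v q m i); auto.
  - assert (Hc : ceil_div t Delta = m) by (apply ceil_unique; auto; lra).
    rewrite Hc. reflexivity.
Qed.

Lemma Y_piece d N h n Delta A mu v q i m lo hi t0 :
  0 < Delta -> (i < d)%nat -> (0 < N)%nat ->
  ode_sol d N h n Delta A mu v q ->
  (IZR m - 1) * Delta <= lo -> hi <= IZR m * Delta -> lo <= t0 <= hi ->
  filterlim (fun t => Yf N mu q m (t / Delta - (IZR m - 1)) i) (within (fun t => lo <= t <= hi) (locally t0))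
     (locally (Yf N mu q m (t0 / Delta - (IZR m - 1)) i)).
Proof. intros HD Hi HN [_ [Hqc _]] Hlo Hhi Ht0.
  replace (t0 / Delta - (IZR m - 1)) with (/ Delta * t0 + - (IZR m - 1)) by (field; lra).
  apply (filterlim_ext (fun t => Yf N mu q m (/ Delta * t + - (IZR m - 1)) i)).
  { intros t. f_equal. field. lra. }
  apply (affine_within (fun s => Yf N mu q m s i) (/ Delta) (- (IZR m - 1)) t0 _ (fun s => 0 <= s <= 1)).
  - apply Rinv_0_lt_compat; auto.
  - intros x Hx. split.
    + apply (Rmult_le_reg_r Delta); auto. field_simplify; lra.
    + apply (Rmult_le_reg_r Delta); auto. field_simplify; lra.
  - unfold Yf. apply filterlim_Cmult_l. apply within_filter, locally_filter.
    apply Hqc; auto. apply b_idx_range; auto. split.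
    + apply (Rmult_le_reg_r Delta); auto. field_simplify; lra.
    + apply (Rmult_le_reg_r Delta); auto. field_simplify; lra.
Qed.

Lemma y_cont d N h n Delta A mu v q i :
  0 < Delta -> (0 < N)%nat -> mu <> RtoC 0 -> (i < d)%nat ->
  ode_sol d N h n Delta A mu v q ->
  (forall nb i, (1 <= nb <= N)%nat -> (i < d)%nat -> q 1 nb i = Bmat_app N mu v nb i) ->
  forall t : R, filterlim (fun t => phi_of_q N Delta mu q t i) (locally t) (locally (phi_of_q N Delta mu q t i)).
Proof. intros HD HN Hmu Hi Hq HB t.
  set (m := ceil_div t Delta). pose proof (ceil_spec t Delta HD) as Hm. fold m in Hm.
  assert (Hrep := y_repr d N h n Delta A mu v q i HD HN Hmu Hi Hq HB).
  assert (Hlt : (IZR m - 1) * Delta < t).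
  { apply (Rmult_lt_reg_r (/ Delta)). apply Rinv_0_lt_compat; auto. field_simplify; lra. }
  destruct (Rlt_le_dec (t / Delta) (IZR m)) as [H|H].
  - assert (Hgt : t < IZR m * Delta).
    { apply (Rmult_lt_reg_r (/ Delta)). apply Rinv_0_lt_compat; auto. field_simplify; lra. }
    apply (glue (fun t => phi_of_q N Delta mu q t i) (fun t => Yf N mu q m (t / Delta - (IZR m - 1)) i) (fun t => Yf N mu q m (t / Delta - (IZR m - 1)) i)
       t ((IZR m - 1) * Delta) (IZR m * Delta)).
    + lra.
    + intros x Hx. apply Hrep. split.
      * apply (Rmult_le_reg_r Delta); auto. field_simplify; lra.
      * apply (Rmult_le_reg_r Delta); auto. field_simplify; lra.
    + intros x Hx. apply Hrep. split.
      * apply (Rmult_le_reg_r Delta); auto. field_simplify; lra.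
      * apply (Rmult_le_reg_r Delta); auto. field_simplify; lra.
    + rewrite (Hrep t m) by lra. apply (Y_piece d N h n Delta A mu v q); auto; lra.
    + rewrite (Hrep t m) by lra. apply (Y_piece d N h n Delta A mu v q); auto; lra.
  - assert (Eu : t / Delta = IZR m) by lra.
    assert (Et : t = IZR m * Delta) by (rewrite <- Eu; field; lra).
    apply (glue (fun t => phi_of_q N Delta mu q t i) (fun t => Yf N mu q m (t / Delta - (IZR m - 1)) i) (fun t => Yf N mu q (m + 1)%Z (t / Delta - (IZR (m + 1)%Z - 1)) i)
       t ((IZR m - 1) * Delta) ((IZR m + 1) * Delta)).
    + lra.
    + intros x Hx. apply Hrep. split.
      * apply (Rmult_le_reg_r Delta); auto. field_simplify; lra.
      * apply (Rmult_le_reg_r Delta); auto. field_simplify; lra.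
    + intros x Hx. apply Hrep. rewrite plus_IZR. split.
      * apply (Rmult_le_reg_r Delta); auto. field_simplify; lra.
      * apply (Rmult_le_reg_r Delta); auto. field_simplify; lra.
    + rewrite (Hrep t m) by lra. apply (Y_piece d N h n Delta A mu v q); auto; lra.
    + rewrite (Hrep t (m + 1)%Z) by (rewrite plus_IZR; lra).
      apply (Y_piece d N h n Delta A mu v q); auto; try rewrite plus_IZR; lra.
Qed.

Lemma y_per d N h n Delta A mu v q i :
  0 < Delta -> (0 < N)%nat -> mu <> RtoC 0 -> (i < d)%nat ->
  ode_sol d N h n Delta A mu v q ->
  (forall nb i, (1 <= nb <= N)%nat -> (i < d)%nat -> q 1 nb i = Bmat_app N mu v nb i) ->
  forall t, phi_of_q N Delta mu q (INR N * Delta + t) i = Cmult mu (phi_of_q N Delta mu q t i).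
Proof. intros HD HN Hmu Hi Hq HB t.
  set (m := ceil_div t Delta). pose proof (ceil_spec t Delta HD) as Hm. fold m in Hm.
  assert (Hrep := y_repr d N h n Delta A mu v q i HD HN Hmu Hi Hq HB).
  assert (E1 : (INR N * Delta + t) / Delta = t / Delta + INR N) by (field; lra).
  assert (E2 : IZR (m + 1 * Z.of_nat N) = IZR m + INR N) by (rewrite plus_IZR, mult_IZR, <- INR_IZR_INZ; ring).
  rewrite (Hrep _ (m + 1 * Z.of_nat N)%Z) by lra. rewrite (Hrep t m) by lra.
  unfold Yf. destruct (ab_shift N m 1 HN) as [Ha Hb]. rewrite Ha, Hb, czpow_succ by auto.
  rewrite E1, E2. replace (t / Delta + INR N - (IZR m + INR N - 1)) with (t / Delta - (IZR m - 1)) by ring. ring.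
Qed.

Lemma Cscale_cancel D c X : D <> 0 -> Cmult c (Cmult (RtoC (/ D)) (Cmult (RtoC D) X)) = Cmult c X.
Proof. intros H. rewrite (Cmult_assoc (RtoC (/ D))). rewrite <- RtoC_mult. rewrite Rinv_l by auto. ring. Qed.

Lemma y_der d N h n Delta A mu v q i :
  0 < Delta -> (0 < N)%nat -> mu <> RtoC 0 -> (i < d)%nat ->
  (forall j i k t, (j <= h)%nat -> (i < d)%nat -> (k < d)%nat -> A j (t + INR N * Delta) i k = A j t i k) ->
  ode_sol d N h n Delta A mu v q ->
  (forall nb i, (1 <= nb <= N)%nat -> (i < d)%nat -> q 1 nb i = Bmat_app N mu v nb i) ->
  forall t, 0 < t -> (forall p : nat, t <> INR p * Delta) ->
  is_derive (K := R_AbsRing) (V := C_R_NormedModule) (fun s => phi_of_q N Delta mu q s i) t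
     (rhs d h n Delta A (fun s l => phi_of_q N Delta mu q s l) t i).
Proof. intros HD HN Hmu Hi Hper Hq HB t Ht Hgrid.
  pose proof Hq as [_ [_ Hqd]].
  set (m := ceil_div t Delta). pose proof (ceil_spec t Delta HD) as Hm. fold m in Hm.
  assert (Hrep := fun l Hl => y_repr d N h n Delta A mu v q l HD HN Hmu Hl Hq HB).
  assert (Hlt : t / Delta < IZR m).
  { destruct (Rlt_le_dec (t / Delta) (IZR m)) as [H|H]; auto. exfalso.
    assert (Hm0 : (0 < m)%Z). { apply lt_IZR. assert (0 < t / Delta) by (apply Rdiv_lt_0_compat; auto). lra. }
    apply (Hgrid (Z.to_nat m)). rewrite INR_IZR_INZ, Z2Nat.id by lia.
    replace (IZR m) with (t / Delta) by lra. field. lra. }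
  set (s := t / Delta - (IZR m - 1)).
  assert (Hs : 0 < s < 1) by (unfold s; lra).
  set (b := b_idx N m). pose proof (b_idx_range N m HN) as Hb. fold b in Hb.
  apply is_derive_ext_loc with (f := fun t' => Yf N mu q m (t' / Delta - (IZR m - 1)) i).
  { apply locally_interval with ((IZR m - 1) * Delta) (IZR m * Delta); simpl.
    - apply (Rmult_lt_reg_r (/ Delta)). apply Rinv_0_lt_compat; auto. field_simplify; lra.
    - apply (Rmult_lt_reg_r (/ Delta)). apply Rinv_0_lt_compat; auto. field_simplify; lra.
    - intros y Hy1 Hy2. symmetry. apply Hrep; auto. split.
      + apply (Rmult_le_reg_r Delta); auto. field_simplify; lra.
      + apply (Rmult_le_reg_r Delta); auto. field_simplify; lra. }
  assert (EV : rhs d h n Delta A (fun s l => phi_of_q N Delta mu q s l) t i =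
     Cmult (czpow mu (a_idx N m)) (Cmult (RtoC (/ Delta)) (Amat_app d N h n Delta A s mu (q s) b i))).
  { unfold Amat_app, rhs. cbv zeta.
    rewrite (Cscale_cancel Delta) by lra.
    rewrite csum_mult_l. apply csum_ext. intros j Hj. rewrite csum_mult_l. apply csum_ext. intros l Hl.
    assert (HA : A j ((s + INR b - 1) * Delta) i l = A j t i l).
    { rewrite <- (A_per_Z N Delta A j i l (fun t => Hper j i l t ltac:(lia) Hi Hl) (a_idx N m) ((s + INR b - 1) * Delta)).
      f_equal. pose proof (ab_decomp N m HN) as E. fold b in E. unfold s.
      rewrite E. field. lra. }
    rewrite HA.
    rewrite (Hrep l Hl (t - INR (n j) * Delta) (m - Z.of_nat (n j))%Z).
    2: { rewrite minus_IZR, <- INR_IZR_INZ.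
         replace ((t - INR (n j) * Delta) / Delta) with (t / Delta - INR (n j)) by (field; lra). lra. }
    replace ((t - INR (n j) * Delta) / Delta - (IZR (m - Z.of_nat (n j)) - 1)) with s.
    2: { unfold s. rewrite minus_IZR, <- INR_IZR_INZ. field. lra. }
    unfold Yf.
    replace (m - Z.of_nat (n j))%Z with (m - Z.of_nat (b_idx N m) + (Z.of_nat b - Z.of_nat (n j)))%Z by (unfold b; ring).
    destruct (ab_comb N m (Z.of_nat b - Z.of_nat (n j)) HN) as [Ea Eb]. rewrite Ea, Eb.
    rewrite czpow_add by auto. ring. }
  rewrite EV. unfold Yf.
  apply (is_derive_ext (fun t' => Cmult (czpow mu (a_idx N m)) (q ((t' + - (IZR m - 1) * Delta) * / Delta) b i))).
  { intros t'. fold b. f_equal. f_equal. field. lra. }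
  apply is_derive_Cmult_l.
  apply (is_derive_aff (fun u => q u b i) (/ Delta) (- (IZR m - 1) * Delta) t).
  replace ((t + - (IZR m - 1) * Delta) * / Delta) with s by (unfold s; field; lra).
  apply Hqd; auto.
Qed.


Lemma part2 d N h n Delta A mu v q :
  0 < Delta -> (0 < N)%nat -> n 0%nat = 0%nat ->
  (forall j, (1 <= j)%nat -> (j < h)%nat -> (n j < n (S j))%nat) ->
  (forall j i k, (j <= h)%nat -> (i < d)%nat -> (k < d)%nat -> smooth (fun t => A j t i k)) ->
  (forall j i k t, (j <= h)%nat -> (i < d)%nat -> (k < d)%nat -> A j (t + INR N * Delta) i k = A j t i k) ->
  mu <> RtoC 0 ->
  ode_sol d N h n Delta A mu v q ->
  (forall nb i, (1 <= nb <= N)%nat -> (i < d)%nat -> q 1 nb i = Bmat_app N mu v nb i) ->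
  in_X d (INR (n h) * Delta) (phi_of_q N Delta mu q) /\
  (forall x : R -> nat -> C,
     dde_sol d h n Delta A (phi_of_q N Delta mu q) x ->
     monodromy_eig d N h n Delta mu (phi_of_q N Delta mu q) x).
Proof.
  intros HD HN Hn0 Hninc Hsm Hper Hmu Hq HB.
  assert (Hyc := fun i Hi => y_cont d N h n Delta A mu v q i HD HN Hmu Hi Hq HB).
  split.
  - intros i Hi t Ht. apply within_of_locally. apply Hyc; auto.
  - intros x [Hx0 [Hxc Hxd]] i Hi theta Hth.
    assert (HT : 0 <= INR N * Delta) by (pose proof (pos_INR N); nra).
    assert (Hxy : forall t, - (INR (n h) * Delta) <= t -> x t i = phi_of_q N Delta mu q t i).
    { apply (dde_uniq d h n Delta A x (fun t l => phi_of_q N Delta mu q t l)); auto.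
      - apply n_le; auto.
      - intros; apply smooth_cont; auto.
      - intros l Hl t Ht. apply within_of_locally. apply Hyc; auto.
      - intros t Ht Hg l Hl. split.
        + apply Hxd; auto.
        + apply (y_der d N h n Delta A mu v q l); auto. }
    rewrite Hxy by lra.
    apply (y_per d N h n Delta A mu v q i); auto.
Qed.


Theorem theorem2p2
  (d N h : nat) (n : nat -> nat) (Delta : R) (A : nat -> R -> nat -> nat -> R)
  (HDelta : 0 < Delta) (HN : (0 < N)%nat)
  (Hn0 : n 0%nat = 0%nat)
  (Hninc : forall j, (1 <= j)%nat -> (j < h)%nat -> (n j < n (S j))%nat)
  (Hsmooth : forall j i k, (j <= h)%nat -> (i < d)%nat -> (k < d)%nat ->
               smooth (fun t => A j t i k))
  (Hper : forall j i k t, (j <= h)%nat -> (i < d)%nat -> (k < d)%nat ->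
               A j (t + INR N * Delta) i k = A j t i k)
  (mu : C) (Hmu : mu <> RtoC 0) :
  (forall (phi : R -> nat -> C),
     in_X d (INR (n h) * Delta) phi ->
     nonzero_X d (INR (n h) * Delta) phi ->
     forall x : R -> nat -> C,
       dde_sol d h n Delta A phi x ->
       monodromy_eig d N h n Delta mu phi x ->
       charmat_kernel d N h n Delta A mu (fun nb i => x ((INR nb - 1) * Delta) i))
  /\
  (forall (v : nat -> nat -> C),
     nonzero_vec d N v ->
     forall q : R -> nat -> nat -> C,
       ode_sol d N h n Delta A mu v q ->
       (forall nb i, (1 <= nb <= N)%nat -> (i < d)%nat -> q 1 nb i = Bmat_app N mu v nb i) ->
       in_X d (INR (n h) * Delta) (phi_of_q N Delta mu q) /\
       (forall x : R -> nat -> C,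
          dde_sol d h n Delta A (phi_of_q N Delta mu q) x ->
          monodromy_eig d N h n Delta mu (phi_of_q N Delta mu q) x)).
Proof.
Proof.
  split.
  - intros phi _ _ x Hdde Hmon. apply (part1 d N h n Delta A mu phi x); auto.
  - intros v _ q Hq HB. apply (part2 d N h n Delta A mu v q); auto.
Qed.
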